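(* Let $(X,d)$ be a metric space, let $\mathcal F\subseteq\mathcal S$ be nonempty, and let $V\subseteq X$ be open with $V\subseteq\overline{A_{\mathcal F}(u,\le t)}$ for all $u\in V$ and all $t>0$. Then $V\subseteq\overline{A_{\mathcal F}(u,t)}$ for all $u\in V$ and all $t>0$. In particular, if $\overline{A_{\operatorname{Sat}(\mathcal F)}(u,\le t)}=X$ for all $u\in X$, $t>0$, then $\overline{A_{\mathcal F}(u,t)}=X$ for all $u\in X$, $t>0$.
   Context: Let $(X,d)$ be a metric space and $\dagger\notin X$ an extra point. A continuous local semigroup on $X$ is a map $(t,u)\mapsto\Phi_tu:[0,\infty)\times X\to X\cup\{\dagger\}$ such that for every $u\in X$ there is $T_u\in(0,\infty]$ with: (i) $\Phi_tu\in X$ for $t<T_u$ and $\Phi_tu=\dagger$ for $t\ge T_u$; (ii) $\Phi_0u=u$, and whenever $s,t\ge 0$ with $s+t<T_u$ one has $t<T_{\Phi_su}$ and $\Phi_{t+s}u=\Phi_t\Phi_su$; (iii) for every $t<T_u$ and $\varepsilon>0$ there is $\delta>0$ such that $|t-t'|+d(u,u')<\delta$ implies $t'<T_{u'}$ and $d(\Phi_tu,\Phi_{t'}u')<\varepsilon$. $\mathcal S$ is the set of all such. Compositions $\Phi^n_{t_n}\cdots\Phi^1_{t_1}u$ are only considered when every partial composition lies in $X$. For $\mathcal F\subseteq\mathcal S$: $A_{\mathcal F}(u,t)=\{\Phi^n_{t_n}\cdots\Phi^1_{t_1}u:\Phi^j\in\mathcal F,\ t_j>0,\ \sum_jt_j=t\}$,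 $A_{\mathcal F}(u,\le t)=\bigcup_{0<s\le t}A_{\mathcal F}(u,s)$. $\mathcal F\preccurlyeq\mathcal G$ means $\overline{A_{\mathcal F}(u,\le t)}\subseteq\overline{A_{\mathcal G}(u,\le t)}$ for all $u\in X,t>0$, and $\operatorname{Sat}(\mathcal F)=\bigcup_{\mathcal G\preccurlyeq\mathcal F}\mathcal G$. *)

(* Defs.v *)
From Stdlib Require Import Reals.
Open Scope R_scope.

Definition is_metric {X : Type} (d : X -> X -> R) : Prop :=
  (forall x y, 0 <= d x y) /\
  (forall x y, d x y = 0 <-> x = y) /\
  (forall x y, d x y = d y x) /\
  (forall x y z, d x z <= d x y + d y z).

Definition is_open {X : Type} (d : X -> X -> R) (V : X -> Prop) : Prop :=
  forall x, V x -> exists r, 0 < r /\ forall y, d x y < r -> V y.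

Definition closure {X : Type} (d : X -> X -> R) (A : X -> Prop) (x : X) : Prop :=
  forall eps, 0 < eps -> exists a, A a /\ d x a < eps.

(* A local semiflow: Phi t u = None encodes the extra point "dagger". *)
Definition flow (X : Type) := R -> X -> option X.

(* t < T, where T : option R encodes (0, +infinity], None = +infinity *)
Definition lt_ext (t : R) (T : option R) : Prop :=
  match T with Some T' => t < T' | None => True end.

Definition pos_ext (T : option R) : Prop :=
  match T with Some T' => 0 < T' | None => True end.

Definition has_lifetime {X : Type} (Phi : flow X) (u : X) (T : option R) : Prop :=
  pos_ext T /\ forall t, 0 <= t -> (Phi t u <> None <-> lt_ext t T).

Definition is_local_semigroup {X : Type} (d : X -> X -> R) (Phi : flow X) : Prop :=
  (forall u, exists T, has_lifetime Phi u T) /\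
  (forall u, Phi 0 u = Some u) /\
  (forall u s t v, 0 <= s -> 0 <= t -> Phi (s + t) u <> None ->
     Phi s u = Some v -> Phi t v <> None /\ Phi (t + s) u = Phi t v) /\
  (forall u t w, 0 <= t -> Phi t u = Some w ->
     forall eps, 0 < eps -> exists delta, 0 < delta /\
       forall t' u', 0 <= t' -> Rabs (t - t') + d u u' < delta ->
         exists w', Phi t' u' = Some w' /\ d w w' < eps).

(* reach F u t y : y = Phi^n_{t_n} ... Phi^1_{t_1} u with n >= 1, Phi^j in F,
   t_j > 0, sum t_j = t, and all partial compositions lying in X. *)
Inductive reach {X : Type} (F : flow X -> Prop) : X -> R -> X -> Prop :=
| reach1 : forall Phi u t y, F Phi -> 0 < t -> Phi t u = Some y -> reach F u t y
| reachS : forall Phi u s v t y, F Phi -> 0 < s -> Phi s u = Some v ->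
    reach F v t y -> reach F u (s + t) y.

Definition A_at {X : Type} (F : flow X -> Prop) (u : X) (t : R) : X -> Prop :=
  fun y => reach F u t y.

Definition A_le {X : Type} (F : flow X -> Prop) (u : X) (t : R) : X -> Prop :=
  fun y => exists s, 0 < s /\ s <= t /\ reach F u s y.

Definition preceq {X : Type} (d : X -> X -> R) (F G : flow X -> Prop) : Prop :=
  forall u t, 0 < t -> forall x, closure d (A_le F u t) x -> closure d (A_le G u t) x.

Definition Sat {X : Type} (d : X -> X -> R) (F : flow X -> Prop) : flow X -> Prop :=
  fun Phi => exists G : flow X -> Prop,
    (forall Psi, G Psi -> is_local_semigroup d Psi) /\ preceq d G F /\ G Phi.

(* Main.v *)
Require Import Defs.
From Stdlib Require Import Reals Lra.
Open Scope R_scope.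

Lemma reach_app {X : Type} (F : flow X -> Prop) u s y :
  reach F u s y -> forall s' w, reach F y s' w -> reach F u (s + s') w.
Proof.
  induction 1; intros s' w Hw.
  - eapply reachS; eauto.
  - rewrite Rplus_assoc. eapply reachS; eauto.
Qed.

Lemma reach_cont {X : Type} (d : X -> X -> R) (F : flow X -> Prop)
  (HFS : forall Phi, F Phi -> is_local_semigroup d Phi) v t a :
  reach F v t a -> forall eps, 0 < eps -> exists delta, 0 < delta /\
    forall v', d v v' < delta -> exists a', reach F v' t a' /\ d a a' < eps.
Proof.
  induction 1 as [Phi u t y HP Ht Hy | Phi u s v t y HP Hs Hv Hr IH];
    intros eps Heps.
  - destruct (HFS Phi HP) as [_ [_ [_ Hc]]].
    destruct (Hc u t y (Rlt_le _ _ Ht) Hy eps Heps) as [del [Hdel Hd]].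
    exists del; split; auto. intros v' Hv'.
    destruct (Hd t v' (Rlt_le _ _ Ht)) as [w' [Hw1 Hw2]].
    { rewrite Rminus_diag, Rabs_R0; lra. }
    exists w'; split; auto. eapply reach1; eauto.
  - destruct (IH eps Heps) as [d1 [Hd1 H1]].
    destruct (HFS Phi HP) as [_ [_ [_ Hc]]].
    destruct (Hc u s v (Rlt_le _ _ Hs) Hv d1 Hd1) as [del [Hdel Hd]].
    exists del; split; auto. intros v' Hv'.
    destruct (Hd s v' (Rlt_le _ _ Hs)) as [w' [Hw1 Hw2]].
    { rewrite Rminus_diag, Rabs_R0; lra. }
    destruct (H1 w' Hw2) as [a' [Ha1 Ha2]].
    exists a'; split; auto. eapply reachS; eauto.
Qed.

Lemma sat_reach {X : Type} (d : X -> X -> R) (Hd : is_metric d)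
  (F : flow X -> Prop)
  (HFS : forall Phi, F Phi -> is_local_semigroup d Phi) u s y :
  reach (Sat d F) u s y -> closure d (A_le F u s) y.
Proof.
  destruct Hd as [Hpos [Hzero [Hsym Htri]]].
  assert (Hself : forall (A : X -> Prop) x, A x -> closure d A x).
  { intros A x Ax e He. exists x; split; auto.
    assert (d x x = 0) by (apply Hzero; reflexivity). lra. }
  assert (Hv : forall Phi u s v, Sat d F Phi -> 0 < s -> Phi s u = Some v ->
              closure d (A_le F u s) v).
  { intros Phi u0 s0 v [G [_ [HG HGP]]] Hs Hp.
    apply (HG u0 s0 Hs). apply Hself. exists s0; repeat split; try lra.
    eapply reach1; eauto. }
  induction 1 as [Phi u t y HP Ht Hy | Phi u s v t y HP Hs Hvv Hr IH].
  - eapply Hv; eauto.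
  - intros eps Heps.
    destruct (IH (eps/2) ltac:(lra)) as [a [[t1 [Ht1 [Ht1' Hra]]] Hya]].
    destruct (reach_cont d F HFS _ _ _ Hra (eps/2) ltac:(lra)) as [del [Hdel Hc]].
    destruct (Hv Phi u s v HP Hs Hvv del Hdel) as [v' [[s0 [Hs0 [Hs0' Hrv]]] Hvv']].
    destruct (Hc v' Hvv') as [a' [Ha1 Ha2]].
    exists a'; split.
    + exists (s0 + t1); repeat split; try lra. eapply reach_app; eauto.
    + pose proof (Htri y a a'). lra.
Qed.

Lemma part1 (X : Type) (d : X -> X -> R)
  (F : flow X -> Prop)
  (HFS : forall Phi, F Phi -> is_local_semigroup d Phi)
  (HFne : exists Phi, F Phi) :
  forall V : X -> Prop, is_open d V ->
     (forall u t, V u -> 0 < t -> forall x, V x -> closure d (A_le F u t) x) ->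
     forall u t, V u -> 0 < t -> forall x, V x -> closure d (A_at F u t) x.
Proof.
  intros V Hopen Hyp u t Hu Ht x Hx eps Heps.
  destruct HFne as [Phi HPhi]. destruct (HFS Phi HPhi) as [_ [H0 [_ Hcont]]].
  destruct (Hopen x Hx) as [r [Hr HrV]].
  destruct (Hcont x 0 x (Rle_refl 0) (H0 x) (Rmin eps r)
              ltac:(apply Rmin_pos; lra)) as [delta [Hdel Hc]].
  assert (Key : forall y, d x y < delta/2 -> forall tau, 0 <= tau -> tau < delta/2 ->
             exists z, Phi tau y = Some z /\ d x z < eps /\ d x z < r).
  { intros y Hy tau Htau Htau'.
    destruct (Hc tau y Htau) as [z [Hz1 Hz2]].
    { rewrite Rabs_minus_sym, Rminus_0_r, Rabs_pos_eq; lra. }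
    exists z; split; auto.
    pose proof (Rmin_l eps r); pose proof (Rmin_r eps r); lra. }
  assert (Main : forall n : nat, forall y s, reach F u s y -> s <= t ->
             d x y < delta/2 -> d x y < eps -> t - s < INR n * (delta/4) ->
             exists w, reach F u t w /\ d x w < eps).
  { induction n as [|n IHn]; intros y s Hry0 Hst Hy1 Hy2 Hn.
    - simpl in Hn. lra.
    - rewrite S_INR in Hn.
      destruct (Rlt_or_le (t - s) (delta/2)) as [Hlt|Hge].
      + destruct (Req_dec s t) as [Heq|Hne].
        * subst. exists y; auto.
        * destruct (Key y Hy1 (t - s) ltac:(lra) Hlt) as [z [Hz1 [Hz2 _]]].
          exists z; split; auto.
          replace t with (s + (t - s)) by ring.
          eapply reach_app; eauto. eapply reach1; eauto; lra.
      + destruct (Key y Hy1 (delta/4) ltac:(lra) ltac:(lra)) as [z [Hz1 [_ Hz3]]].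
        pose proof (HrV z Hz3) as HVz.
        destruct (Hyp z (t - s - delta/4) HVz ltac:(lra) x Hx (Rmin (delta/2) eps)
                    ltac:(apply Rmin_pos; lra))
          as [a [[s1 [Hs1 [Hs1' Hra]]] Hxa]].
        pose proof (Rmin_l (delta/2) eps); pose proof (Rmin_r (delta/2) eps).
        apply (IHn a (s + (delta/4 + s1))); try lra.
        eapply reach_app; eauto. eapply reachS; eauto; lra. }
  destruct (Hyp u t Hu Ht x Hx (Rmin (delta/2) eps) ltac:(apply Rmin_pos; lra))
    as [y [[s0 [Hs0 [Hs0' Hry]]] Hxy]].
  pose proof (Rmin_l (delta/2) eps); pose proof (Rmin_r (delta/2) eps).
  destruct (INR_archimed (delta/4) (t - s0) ltac:(lra)) as [n Hn].
  destruct (Main n y s0 Hry Hs0' ltac:(lra) ltac:(lra) ltac:(lra)) as [w [Hw1 Hw2]].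
  exists w; split; auto.
Qed.

Theorem lemma3p5 (X : Type) (d : X -> X -> R) (Hd : is_metric d)
  (F : flow X -> Prop)
  (HFS : forall Phi, F Phi -> is_local_semigroup d Phi)
  (HFne : exists Phi, F Phi) :
  (forall V : X -> Prop, is_open d V ->
     (forall u t, V u -> 0 < t -> forall x, V x -> closure d (A_le F u t) x) ->
     forall u t, V u -> 0 < t -> forall x, V x -> closure d (A_at F u t) x)
  /\
  ((forall u t, 0 < t -> forall x, closure d (A_le (Sat d F) u t) x) ->
     forall u t, 0 < t -> forall x, closure d (A_at F u t) x).
Proof.
  split.
  - apply part1; auto.
  - intros H u t Ht x.
    apply (part1 X d F HFS HFne (fun _ => True)); auto.
    + intros y _. exists 1; split; auto; lra.
    + intros u0 t0 _ Ht0 x0 _ eps Heps.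
      destruct (H u0 t0 Ht0 x0 (eps/2) ltac:(lra)) as [a [[s [Hs [Hs' Hra]]] Hxa]].
      destruct (sat_reach d Hd F HFS _ _ _ Hra (eps/2) ltac:(lra))
        as [b [[s1 [Hs1 [Hs1' Hrb]]] Hab]].
      exists b; split.
      * exists s1; repeat split; auto; lra.
      * destruct Hd as [_ [_ [_ Htri]]]. pose proof (Htri x0 a b); lra.
Qed.
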